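(* Let $(C,\mathfrak p,\mathfrak d)$ be a regular $q$-cycle coalgebra with $\mathfrak p_{11}^1\ne0$. Then $\mathfrak d_{1r}^1=\mathfrak p_{1r}^1$ for all $r\in\{0,\dots,n-1\}$.
   Context: $K$ is an algebraically closed field of characteristic $0$ and $n\ge2$. $C$ is the coalgebra dual to $K[y]/\langle y^n\rangle$: basis $x_0,\dots,x_{n-1}$, $\Delta(x_i)=\sum_{j+k=i}x_j\otimes x_k$, $\epsilon(x_i)=\delta_{i0}$; $C\otimes C$ has the tensor product coalgebra structure; Sweedler notation $\Delta(b)=b_{(1)}\otimes b_{(2)}$. For linear maps $\mathfrak p,\mathfrak d\colon C\otimes C\to C$ write $a\cdot b=\mathfrak p(a\otimes b)$, $a:b=\mathfrak d(a\otimes b)$, $\mathfrak p(x_i\otimes x_j)=\sum_{k=0}^{n-1}\mathfrak p_{ij}^kx_k$, $\mathfrak d(x_i\otimes x_j)=\sum_{k=0}^{n-1}\mathfrak d_{ij}^kx_k$. A triple $(C,\mathfrak p,\mathfrak d)$ with $\mathfrak p,\mathfrak d$ coalgebra morphisms is a regular $q$-magma coalgebra if there are coalgebra morphisms $a\otimes b\mapsto a^b$, $a\otimes b\mapsto a_b$ from $C\otimes C$ to $C$ with $a^{b_{(1)}}\cdot b_{(2)}=(a\cdot b_{(1)})^{b_{(2)}}=\epsilon(b)a$ and $(a:b_{(2)})_{b_{(1)}}=a_{b_{(2)}}:b_{(1)}=\epsilon(b)a$. It is a regular $q$-cycle coalgebra if moreover for all $a,b,c$: (1) $(a\cdot b_{(1)})\cdot(c:b_{(2)})=(a\cdot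 c_{(2)})\cdot(b\cdot c_{(1)})$; (2) $(a\cdot b_{(1)}):(c\cdot b_{(2)})=(a:c_{(2)})\cdot(b:c_{(1)})$; (3) $(a:b_{(1)}):(c:b_{(2)})=(a:c_{(2)}):(b\cdot c_{(1)})$. *)

(* Defs.v *)
From HB Require Import structures.
From mathcomp Require Import all_boot all_order all_algebra.
Set Implicit Arguments. Unset Strict Implicit. Unset Printing Implicit Defensive.
Import Order.TTheory GRing.Theory.
Local Open Scope ring_scope.

(* C = dual coalgebra of K[y]/<y^n>, basis x_0..x_{n-1}.
   An element of C is its coordinate vector 'I_n -> K.
   A linear map f : C (x) C -> C is given by its structure constants
   f i j k = f_{ij}^k (only indices < n are ever used). *)
Section QCycle.
Variables (K : fieldType) (n : nat).

Definition vec := 'I_n -> K.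

Definition bas (i : nat) : vec := fun k => (k == i :> nat)%:R.

Definition bil (f : nat -> nat -> nat -> K) (a b : vec) : vec :=
  fun k => \sum_(i < n) \sum_(j < n) a i * b j * f i j k.

Definition eps (b : vec) : K := \sum_(j < n) b j * (j == 0%N :> nat)%:R.

(* coefficient of x_{j1} (x) x_{j2} in Delta(b), where
   Delta(x_j) = sum_{j1+j2=j} x_{j1} (x) x_{j2} *)
Definition delta (b : vec) (j1 j2 : 'I_n) : K :=
  \sum_(j < n) b j * ((j1 + j2)%N == j :> nat)%:R.

Definition sw (b : vec) (F : vec -> vec -> K) : K :=
  \sum_(j1 < n) \sum_(j2 < n) delta b j1 j2 * F (bas j1) (bas j2).

(* f : C (x) C -> C is a coalgebra morphism (C (x) C with the tensor
   product coalgebra structure), written on the basis x_i (x) x_j. *)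
Definition coalg_morph (f : nat -> nat -> nat -> K) : Prop :=
  (forall i j : 'I_n, f i j 0%N = ((i == 0%N :> nat) && (j == 0%N :> nat))%:R) /\
  (forall i j a b : 'I_n,
     \sum_(k < n) f i j k * ((a + b)%N == k :> nat)%:R =
     \sum_(i1 < n) \sum_(i2 < n | (i1 + i2)%N == i :> nat)
       \sum_(j1 < n) \sum_(j2 < n | (j1 + j2)%N == j :> nat)
          f i1 j1 a * f i2 j2 b).

(* regular q-magma coalgebra (C, p, d); U is a (x) b |-> a^b, V is a (x) b |-> a_b *)
Definition regular_qmagma (P D : nat -> nat -> nat -> K) : Prop :=
  coalg_morph P /\ coalg_morph D /\
  exists U V : nat -> nat -> nat -> K,
    coalg_morph U /\ coalg_morph V /\
    (forall (a b : vec) (k : 'I_n),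
       sw b (fun b1 b2 => bil P (bil U a b1) b2 k) = eps b * a k) /\
    (forall (a b : vec) (k : 'I_n),
       sw b (fun b1 b2 => bil U (bil P a b1) b2 k) = eps b * a k) /\
    (forall (a b : vec) (k : 'I_n),
       sw b (fun b1 b2 => bil V (bil D a b2) b1 k) = eps b * a k) /\
    (forall (a b : vec) (k : 'I_n),
       sw b (fun b1 b2 => bil D (bil V a b2) b1 k) = eps b * a k).

Definition regular_qcycle (P D : nat -> nat -> nat -> K) : Prop :=
  regular_qmagma P D /\
  (forall (a b c : vec) (k : 'I_n),
     sw b (fun b1 b2 => bil P (bil P a b1) (bil D c b2) k) =
     sw c (fun c1 c2 => bil P (bil P a c2) (bil P b c1) k)) /\
  (forall (a b c : vec) (k : 'I_n),
     sw b (fun b1 b2 => bil D (bil P a b1) (bil P c b2) k) =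
     sw c (fun c1 c2 => bil P (bil D a c2) (bil D b c1) k)) /\
  (forall (a b c : vec) (k : 'I_n),
     sw b (fun b1 b2 => bil D (bil D a b1) (bil D c b2) k) =
     sw c (fun c1 c2 => bil D (bil D a c2) (bil P b c1) k)).

End QCycle.

(* Main.v *)
Require Import Defs.
From mathcomp Require Import all_boot all_order all_algebra.
From mathcomp Require Import zify ring.
Set Implicit Arguments. Unset Strict Implicit. Unset Printing Implicit Defensive.
Import GRing.Theory.
Local Open Scope ring_scope.

Section Helpers.
Variable K : fieldType.

Lemma sum_pick1 N k (G : nat -> K) : (k < N)%N ->
  (forall x, (x < N)%N -> x != k -> G x = 0) -> \sum_(x < N) G x = G k.
Proof.
move=> hk H; rewrite (bigD1 (Ordinal hk)) //= big1 ?addr0 // => x hx.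
apply: H (ltn_ord x) _; apply: contra hx => /eqP e; apply/eqP/val_inj; exact: e.
Qed.

Lemma sum_zero N (G : nat -> K) :
  (forall x, (x < N)%N -> G x = 0) -> \sum_(x < N) G x = 0.
Proof. by move=> H; rewrite big1 // => x _; apply: H. Qed.

Lemma sum_pick2 N k1 k2 (G : nat -> K) : (k1 < N)%N -> (k2 < N)%N -> k1 != k2 ->
  (forall x, (x < N)%N -> x != k1 -> x != k2 -> G x = 0) ->
  \sum_(x < N) G x = G k1 + G k2.
Proof.
move=> h1 h2 h12 H; rewrite (bigD1 (Ordinal h1)) //= (bigD1 (Ordinal h2)) /=; last first.
  by apply: contra h12 => /eqP e; rewrite -[k1]/(nat_of_ord (Ordinal h1)) -e.
rewrite big1 ?addr0 // => x /andP [hx1 hx2].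
apply: H (ltn_ord x) _ _.
  by apply: contra hx1 => /eqP e; apply/eqP/val_inj.
by apply: contra hx2 => /eqP e; apply/eqP/val_inj.
Qed.

Lemma sum2_pick1 N M k l (G : nat -> nat -> K) : (k < N)%N -> (l < M)%N ->
  (forall x y, (x < N)%N -> (y < M)%N -> (x != k) || (y != l) -> G x y = 0) ->
  \sum_(x < N) \sum_(y < M) G x y = G k l.
Proof.
move=> hk hl H; rewrite (@sum_pick1 N k (fun x => \sum_(y < M) G x y) hk).
  by apply: sum_pick1 => // y hy hyl; apply: H => //; rewrite hyl orbT.
by move=> x hx hxk; apply: sum_zero => y hy; apply: H => //; rewrite hxk.
Qed.

Lemma sum2_pick2 N M k1 l1 k2 l2 (G : nat -> nat -> K) :
  (k1 < N)%N -> (l1 < M)%N -> (k2 < N)%N -> (l2 < M)%N -> (k1 != k2) || (l1 != l2) ->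
  (forall x y, (x < N)%N -> (y < M)%N -> ((x != k1) || (y != l1)) ->
      ((x != k2) || (y != l2)) -> G x y = 0) ->
  \sum_(x < N) \sum_(y < M) G x y = G k1 l1 + G k2 l2.
Proof.
move=> h1 g1 h2 g2 hd H.
have [e|ne] := eqVneq k1 k2.
  subst k2; rewrite eqxx /= in hd.
  rewrite (@sum_pick1 N k1 (fun x => \sum_(y < M) G x y) h1); last first.
    by move=> x hx hxk; apply: sum_zero => y hy; apply: H => //; rewrite hxk.
  apply: sum_pick2 => // y hy hy1 hy2; apply: H => //; rewrite ?hy1 ?hy2 orbT //.
rewrite (@sum_pick2 N k1 k2 (fun x => \sum_(y < M) G x y) h1 h2 ne); last first.
  by move=> x hx hx1 hx2; apply: sum_zero => y hy; apply: H => //; rewrite ?hx1 ?hx2.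
rewrite (@sum_pick1 M l1 (G k1) g1); last first.
  by move=> y hy hy1; apply: H => //; rewrite ?hy1 ?orbT // ne.
rewrite (@sum_pick1 M l2 (G k2) g2) // => y hy hy1; apply: H => //; rewrite ?hy1 ?orbT //.
by rewrite eq_sym ne.
Qed.

Lemma sum_if N i i1 (G : nat -> K) : (i < N)%N ->
  \sum_(i2 < N | (i1 + i2)%N == i) G i2 = if (i1 <= i)%N then G (i - i1)%N else 0.
Proof.
move=> hi; case: leqP => h.
  have hlt : (i - i1 < N)%N by lia.
  rewrite (bigD1 (Ordinal hlt)) /=; last by apply/eqP; lia.
  rewrite big1 ?addr0 // => x /andP [/eqP hx hne]; exfalso.
  move/negP: hne; apply; apply/eqP/val_inj => /=; lia.
by rewrite big1 // => x /eqP; lia.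
Qed.

End Helpers.


Section CM.
Variables (K : fieldType) (n : nat) (hn : (1 < n)%N) (f : nat -> nat -> nat -> K).
Hypothesis Hf : coalg_morph n f.

Lemma f0 i j : (i < n)%N -> (j < n)%N -> f i j 0%N = ((i == 0%N) && (j == 0%N))%:R.
Proof. by move=> hi hj; exact: (Hf.1 (Ordinal hi) (Ordinal hj)). Qed.

Lemma cmE a b i j : (a < n)%N -> (b < n)%N -> (i < n)%N -> (j < n)%N ->
  (if (a + b < n)%N then f i j (a + b) else 0) =
  \sum_(i1 < n) \sum_(j1 < n)
     (if (i1 <= i)%N && (j1 <= j)%N then f i1 j1 a * f (i - i1) (j - j1) b else 0).
Proof.
move=> ha hb hi hj.
have E := Hf.2 (Ordinal hi) (Ordinal hj) (Ordinal ha) (Ordinal hb); simpl in E.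
have L : (if (a + b < n)%N then f i j (a + b) else 0) =
    \sum_(k < n) f i j k * ((a + b)%N == k)%:R.
  case: ltnP => hab.
    rewrite (@sum_pick1 K n (a + b) (fun k => f i j k * ((a + b)%N == k)%:R)) //.
      by rewrite eqxx mulr1.
    by move=> x hx; rewrite eq_sym => /negPf ->; rewrite mulr0.
  symmetry; apply: (@sum_zero K n (fun k => f i j k * ((a + b)%N == k)%:R)) => x hx.
  have -> : ((a + b)%N == x) = false by apply/eqP; lia.
  by rewrite mulr0.
rewrite L E; apply: eq_bigr => i1 _.
rewrite (eq_bigr (fun i2 : 'I_n => \sum_(j1 < n)
   (if (j1 <= j)%N then f i1 j1 a * f i2 (j - j1) b else 0))); last first.
  move=> i2 _; apply: eq_bigr => j1 _.
  exact: (@sum_if K n j j1 (fun j2 => f i1 j1 a * f i2 j2 b)).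
rewrite (@sum_if K n i i1 (fun i2 => \sum_(j1 < n)
   (if (j1 <= j)%N then f i1 j1 a * f i2 (j - j1) b else 0))) //.
case: leqP => h /=; first by [].
by rewrite big1.
Qed.

Lemma f001 : f 0%N 0%N 1%N = 0.
Proof.
set t := f 0%N 0%N 1%N.
have hn0 : (0 < n)%N by lia.
have pw : forall k, (k < n)%N -> f 0%N 0%N k = t ^+ k.
  elim=> [|k IH] hk; first by rewrite f0 ?expr0.
  have := @cmE 1%N k 0%N 0%N hn (ltnW hk) hn0 hn0.
  rewrite add1n hk => ->.
  rewrite (@sum2_pick1 K n n 0 0 (fun x y => if (x <= 0)%N && (y <= 0)%N
       then f x y 1%N * f (0 - x) (0 - y) k else 0)) //=.
    by rewrite IH ?exprS //; lia.
  by move=> x y _ _ hxy; case: ifP => // /andP [h1 h2]; exfalso; lia.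
have := @cmE 1%N n.-1 0%N 0%N hn (ltac:(lia)) hn0 hn0.
have -> : (1 + n.-1 < n)%N = false by lia.
rewrite (@sum2_pick1 K n n 0 0 (fun x y => if (x <= 0)%N && (y <= 0)%N
       then f x y 1%N * f (0 - x) (0 - y) n.-1 else 0)) //=; last first.
  by move=> x y _ _ hxy; case: ifP => // /andP [h1 h2]; exfalso; lia.
rewrite !subnn (pw n.-1); last by lia.
rewrite -exprS => /esym/eqP; rewrite expf_eq0 => /andP [_ /eqP] //.
Qed.

Lemma W1_1 m : (forall j, (j < m)%N -> (j < n)%N -> f 0%N j 1%N = 0) ->
  forall i j, (i < n)%N -> (j < n)%N -> (m * i + j < m)%N -> f i j 1%N = 0.
Proof.
move=> H i j hi hj h.
have i0 : i = 0%N by case: i hi h => // i _; rewrite mulnS; lia.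
by subst i; apply: H => //; lia.
Qed.

Lemma W1 m : (0 < m)%N -> (forall j, (j < m)%N -> (j < n)%N -> f 0%N j 1%N = 0) ->
  forall k, (k < n)%N -> forall i j, (i < n)%N -> (j < n)%N ->
  (m * i + j < m * k)%N -> f i j k = 0.
Proof.
move=> hm H; elim=> [|k IH] hk i j hi hj h; first by lia.
case: k IH hk h => [|k] IH hk h.
  by apply: (W1_1 H) => //; rewrite muln1 in h.
have := @cmE 1%N k.+1 i j hn (ltnW hk) hi hj.
rewrite add1n hk => ->.
apply: big1 => x _; apply: big1 => y _.
case: ifP => // /andP [hx hy].
have E : (m * i = m * x + m * (i - x))%N by rewrite -mulnDr subnKC.
case: (ltnP (m * x + y) m) => h1.
  by rewrite (W1_1 H) ?mul0r //; lia.
rewrite (IH (ltnW hk)) ?mulr0 //; try lia.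
Qed.

Lemma W2 : forall k, (k < n)%N -> f k 0%N k = (f 1%N 0%N 1%N) ^+ k.
Proof.
have H1 : forall j, (j < 1)%N -> (j < n)%N -> f 0%N j 1%N = 0.
  move=> j hj _; have -> : j = 0%N by lia.
  exact: f001.
have V := W1 (ltn0Sn 0) H1.
elim=> [|k IH] hk; first by rewrite f0 ?expr0 //; lia.
have := @cmE 1%N k k.+1 0%N hn (ltnW hk) hk (ltac:(lia)).
rewrite add1n hk => ->.
rewrite (@sum2_pick1 K n n 1 0 (fun x y => if (x <= k.+1)%N && (y <= 0)%N
       then f x y 1%N * f (k.+1 - x) (0 - y) k else 0)) //=; first last.
- move=> x y hx hy hxy; case: ifP => // /andP [h1 h2].
  have y0 : y = 0%N by lia.
  subst y; case: x hx hxy h1 => [|[|x]] hx hxy h1 //.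
    by rewrite f001 mul0r.
  by rewrite (V k) ?mulr0 //; lia.
- lia.
- by rewrite subn1 subnn /= IH ?exprS //; lia.
Qed.

Lemma S3 m : (0 < m)%N -> (m < n)%N ->
  (forall j, (j < m)%N -> (j < n)%N -> f 0%N j 1%N = 0) ->
  forall k, (0 < k)%N -> (k < n)%N ->
  \sum_(i1 < n) \sum_(j1 < n) (if (i1 <= k)%N && (j1 <= m)%N
      then f i1 j1 1%N * f (k - i1) (m - j1) k else 0)
  = f 1%N 0%N 1%N * f k.-1 m k + f 0%N m 1%N * f k 0%N k.
Proof.
move=> hm hmn H k hk0 hk.
rewrite (@sum2_pick2 K n n 1 0 0 m (fun x y => if (x <= k)%N && (y <= m)%N
      then f x y 1%N * f (k - x) (m - y) k else 0)); [ | lia | lia | lia | lia | by [] | ].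
  have -> : ((1 <= k) && (0 <= m))%N = true by lia.
  have -> : ((0 <= k) && (m <= m))%N = true by lia.
  by rewrite subn1 !subn0 subnn.
move=> x y hx hy h1 h2; case: ifP => // /andP [hxk hym].
case: (ltnP (m * x + y) m) => c1; first by rewrite (W1_1 H) ?mul0r //; lia.
have c2 : (m < m * x + y)%N.
  move: h1 h2 c1 hym; case: x {hx hxk} => [|[|x]]; rewrite ?muln0 ?muln1 ?mulnS; lia.
have E : (m * k = m * x + m * (k - x))%N by rewrite -mulnDr subnKC.
by rewrite (W1 hm H (k:=k)) ?mulr0 //; lia.
Qed.

Lemma W3 m : (0 < m)%N -> (m < n)%N ->
  (forall j, (j < m)%N -> (j < n)%N -> f 0%N j 1%N = 0) ->
  forall k, (0 < k)%N -> (k < n)%N ->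
  f k.-1 m k = k%:R * (f 1%N 0%N 1%N) ^+ k.-1 * f 0%N m 1%N.
Proof.
move=> hm hmn H; elim=> [|k IH] // _ hk.
case: k IH hk => [|k] IH hk; first by rewrite /= expr0 !mul1r.
have := @cmE 1%N k.+1 k.+1 m hn (ltnW hk) (ltnW hk) hmn.
rewrite add1n hk => -> /=.
rewrite (S3 hm hmn H) //; last lia.
rewrite IH; [|by []|lia].
rewrite (@W2 k.+1); last lia.
rewrite /= exprS; ring.
Qed.

Lemma Amain : (forall N, (0 < N)%N -> N%:R != 0 :> K) -> f 1%N 0%N 1%N != 0 ->
  forall m, (m < n)%N -> f 0%N m 1%N = 0.
Proof.
move=> hchar ha; elim/ltn_ind => m IH hm.
case: m IH hm => [|m] IH hm; first exact: f001.
have H : forall j, (j < m.+1)%N -> (j < n)%N -> f 0%N j 1%N = 0.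
  by move=> j hj hjn; apply: IH.
have := @cmE 1%N n.-1 n.-1 m.+1 hn (ltac:(lia)) (ltac:(lia)) hm.
have -> : (1 + n.-1 < n)%N = false by lia.
rewrite (S3 (ltn0Sn m) hm H); [|lia|lia].
rewrite (W3 (ltn0Sn m) hm H); [|lia|lia].
rewrite (@W2 n.-1); last lia.
have [n' en] : exists n', n = n'.+2 by exists n.-2; lia.
rewrite en /= => E.
have : (n'.+2)%:R * (f 1%N 0%N 1%N) ^+ n'.+1 * f 0%N m.+1 1%N = 0.
  by rewrite E exprS; ring.
move/eqP; rewrite !mulf_eq0 expf_eq0 (negPf (hchar _ _)) // (negPf ha) /=.
by move/eqP.
Qed.

Lemma Xv : (forall j, (j < n)%N -> f 0%N j 1%N = 0) ->
  forall k i j, (k < n)%N -> (i < n)%N -> (j < n)%N -> (i < k)%N -> f i j k = 0.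
Proof.
move=> HA k i j hk hi hj hik.
have H : forall j, (j < n)%N -> (j < n)%N -> f 0%N j 1%N = 0 by move=> j' h _; exact: HA.
apply: (W1 (ltnW hn) H hk hi hj).
have : (n * i.+1 <= n * k)%N by rewrite leq_mul2l hik orbT.
rewrite mulnS; lia.
Qed.

Lemma W4 : (forall j, (j < n)%N -> f 0%N j 1%N = 0) -> f 1%N 0%N 1%N = 1 ->
  forall k, (k < n)%N -> f k 1%N k = k%:R * f 1%N 1%N 1%N.
Proof.
move=> HA h1; elim=> [|k IH] hk; first by rewrite f0 ?mul0r.
have := @cmE 1%N k k.+1 1%N hn (ltnW hk) hk hn.
rewrite add1n hk => ->.
rewrite (@sum2_pick2 K n n 1 0 1 1 (fun x y => if (x <= k.+1)%N && (y <= 1)%N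
      then f x y 1%N * f (k.+1 - x) (1 - y) k else 0)); [ | lia | lia | lia | lia | by [] | ].
  rewrite /= subn1 /= subn0 subnn IH; last lia.
  rewrite (@W2 k); last lia.
  by rewrite h1 expr1n mulr1 mul1r mulrS mulrDl mul1r addrC.
move=> x y hx hy hx1 hx2; case: ifP => // /andP [hxk hy1].
case: x hx hx1 hx2 hxk => [|[|x]] hx hx1 hx2 hxk.
- by rewrite HA ?mul0r.
- exfalso; move: hx1 hx2 hy1; case: y hy => [|[|y]] //.
- by rewrite (@Xv HA k (k.+1 - x.+2) (1 - y)) ?mulr0 //; lia.
Qed.

End CM.

Section CM2.
Variables (K : fieldType) (n : nat) (hn : (1 < n)%N) (f : nat -> nat -> nat -> K).
Hypothesis Hf : coalg_morph n f.

Lemma Vsum : forall k i j, (k < n)%N -> (i < n)%N -> (j < n)%N -> (i + j < k)%N -> f i j k = 0.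
Proof.
have H1 : forall j, (j < 1)%N -> (j < n)%N -> f 0%N j 1%N = 0.
  move=> j hj _; have -> : j = 0%N by lia.
  exact: (f001 hn Hf).
move=> k i j hk hi hj h; apply: (W1 hn Hf (ltn0Sn 0) H1 hk hi hj); rewrite !mul1n; lia.
Qed.

End CM2.

Section Bil.
Variables (K : fieldType) (n : nat).

Lemma bil_def (f : nat -> nat -> nat -> K) (a b : vec K n) k :
  bil f a b k = \sum_(u < n) \sum_(v < n) a u * b v * f u v k.
Proof. by []. Qed.

Lemma bilE (f : nat -> nat -> nat -> K) i j (k : 'I_n) : (i < n)%N -> (j < n)%N ->
  bil f (bas K i) (bas K j) k = f i j k.
Proof.
move=> hi hj; rewrite /bil /bas.
rewrite (@sum2_pick1 K n n i j (fun x y : nat => (x == i)%:R * (y == j)%:R * f x y k)) //.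
  by rewrite !eqxx !mul1r.
move=> x y _ _ /orP [] /negPf ->; by rewrite ?(mul0r, mulr0).
Qed.

Lemma bilEr (f : nat -> nat -> nat -> K) (w : vec K n) j (k : 'I_n) : (j < n)%N ->
  bil f w (bas K j) k = \sum_(u < n) w u * f u j k.
Proof.
move=> hj; rewrite /bil /bas; apply: eq_bigr => u _.
rewrite (@sum_pick1 K n j (fun y : nat => w u * (y == j)%:R * f u y k)) //.
  by rewrite eqxx mulr1.
by move=> x _ /negPf ->; rewrite mulr0 mul0r.
Qed.

Lemma deltaE j (j1 j2 : 'I_n) : (j < n)%N ->
  delta (bas K j) j1 j2 = ((j1 + j2)%N == j)%:R.
Proof.
move=> hj; rewrite /delta /bas.
rewrite (@sum_pick1 K n j (fun y : nat => (y == j)%:R * ((j1 + j2)%N == y)%:R)) //.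
  by rewrite eqxx mul1r.
by move=> x _ /negPf ->; rewrite mul0r.
Qed.

Lemma swE (F : vec K n -> vec K n -> K) j : (j < n)%N ->
  sw (bas K j) F = \sum_(j1 < n) (if (j1 <= j)%N then F (bas K j1) (bas K (j - j1)%N) else 0).
Proof.
move=> hj; rewrite /sw; apply: eq_bigr => j1 _.
under eq_bigr => j2 _ do rewrite deltaE //.
case: leqP => h.
  rewrite (@sum_pick1 K n (j - j1) (fun y : nat => ((j1 + y)%N == j)%:R * F (bas K j1) (bas K y))).
  - by rewrite subnKC // eqxx mul1r.
  - lia.
  move=> x _ hx; have -> : ((j1 + x)%N == j) = false by apply/eqP; lia.
  by rewrite mul0r.
apply: (@sum_zero K n (fun y : nat => ((j1 + y)%N == j)%:R * F (bas K j1) (bas K y))) => x _.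
have -> : ((j1 + x)%N == j) = false by apply/eqP; lia.
by rewrite mul0r.
Qed.

Lemma sw2E (Q R1 R2 : nat -> nat -> nat -> K) i l j (k : 'I_n) : (i < n)%N -> (l < n)%N -> (j < n)%N ->
  sw (bas K j) (fun b1 b2 => bil Q (bil R1 (bas K i) b1) (bil R2 (bas K l) b2) k) =
  \sum_(j1 < n) (if (j1 <= j)%N then
     \sum_(u < n) \sum_(v < n) R1 i j1 u * R2 l (j - j1)%N v * Q u v k else 0).
Proof.
move=> hi hl hj; rewrite swE //; apply: eq_bigr => j1 _.
case: ifP => // h; rewrite bil_def; apply: eq_bigr => u _; apply: eq_bigr => v _.
by rewrite !bilE //; lia.
Qed.

Lemma sw2E' (Q R1 R2 : nat -> nat -> nat -> K) i l j (k : 'I_n) : (i < n)%N -> (l < n)%N -> (j < n)%N ->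
  sw (bas K j) (fun c1 c2 => bil Q (bil R1 (bas K i) c2) (bil R2 (bas K l) c1) k) =
  \sum_(c1 < n) (if (c1 <= j)%N then
     \sum_(u < n) \sum_(v < n) R1 i (j - c1)%N u * R2 l c1 v * Q u v k else 0).
Proof.
move=> hi hl hj; rewrite swE //; apply: eq_bigr => j1 _.
case: ifP => // h; rewrite bil_def; apply: eq_bigr => u _; apply: eq_bigr => v _.
by rewrite !bilE //; lia.
Qed.

End Bil.


Section Van.
Variables (K : fieldType) (n : nat) (hn : (1 < n)%N) (f : nat -> nat -> nat -> K).
Hypothesis Hf : coalg_morph n f.
Hypothesis HA : forall j, (j < n)%N -> f 0%N j 1%N = 0.

Lemma V1u j u : (j < n)%N -> (u < n)%N -> u != 1%N -> f 1%N j u = 0.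
Proof.
move=> hj hu hu1; case: u hu hu1 => [|u] hu hu1.
  by rewrite (f0 Hf) //.
by rewrite (Xv hn Hf HA) //; lia.
Qed.

Lemma V00 v : (v < n)%N -> f 0%N 0%N v = (v == 0%N)%:R.
Proof.
move=> hv; case: v hv => [|v] hv; first by rewrite (f0 Hf) //; lia.
by rewrite (Xv hn Hf HA) //; lia.
Qed.

Lemma V01 v : (v < n)%N -> f 0%N 1%N v = 0.
Proof.
move=> hv; case: v hv => [|v] hv; first by rewrite (f0 Hf).
by rewrite (Xv hn Hf HA) //; lia.
Qed.

Lemma V10 v : (v < n)%N -> f 1%N 0%N v = (v == 1%N)%:R * f 1%N 0%N 1%N.
Proof.
move=> hv; have [->|ne] := eqVneq v 1%N; first by rewrite mul1r.
rewrite V1u //; last lia.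
by rewrite /= mulr0n mul0r.
Qed.

Lemma S01 (Q : nat -> K) : \sum_(v < n) f 0%N 1%N v * Q v = 0.
Proof. by apply: big1 => v _; rewrite V01 // mul0r. Qed.

Lemma S00 (Q : nat -> K) : \sum_(v < n) f 0%N 0%N v * Q v = Q 0%N.
Proof.
rewrite (@sum_pick1 K n 0 (fun v => f 0%N 0%N v * Q v)); last 2 first.
- lia.
- by move=> x hx /negPf hx0; rewrite V00 // hx0 /= mulr0n mul0r.
rewrite V00; last lia.
by rewrite eqxx mul1r.
Qed.

Lemma S1j j (Q : nat -> K) : (j < n)%N ->
  \sum_(v < n) f 1%N j v * Q v = f 1%N j 1%N * Q 1%N.
Proof.
move=> hj; rewrite (@sum_pick1 K n 1 (fun v => f 1%N j v * Q v)) //.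
by move=> x hx hx1; rewrite V1u // mul0r.
Qed.

End Van.

Section Pick.
Variables (K : fieldType) (n : nat).

Lemma pickU (f g Q : nat -> nat -> nat -> K) j1 l j2 (k : nat) :
  (forall u, (u < n)%N -> u != 1%N -> f 1%N j1 u = 0) -> (1 < n)%N ->
  \sum_(u < n) \sum_(v < n) f 1%N j1 u * g l j2 v * Q u v k =
  f 1%N j1 1%N * \sum_(v < n) g l j2 v * Q 1%N v k.
Proof.
move=> H hn.
rewrite (@sum_pick1 K n 1 (fun u => \sum_(v < n) f 1%N j1 u * g l j2 v * Q u v k)) //.
  by rewrite mulr_sumr; apply: eq_bigr => v _; rewrite mulrA.
by move=> x hx hx1; apply: big1 => v _; rewrite H // !mul0r.
Qed.

Lemma pickV (g Q : nat -> nat -> nat -> K) l j2 (k : nat) :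
  (forall v, (v < n)%N -> v != 1%N -> g l j2 v = 0) -> (1 < n)%N ->
  \sum_(v < n) g l j2 v * Q 1%N v k = g l j2 1%N * Q 1%N 1%N k.
Proof.
move=> H hn.
rewrite (@sum_pick1 K n 1 (fun v => g l j2 v * Q 1%N v k)) //.
by move=> x hx hx1; rewrite H // mul0r.
Qed.

Lemma sum_le1 (G : nat -> K) : (1 < n)%N ->
  \sum_(x < n) (if (x <= 1)%N then G x else 0) = G 0%N + G 1%N.
Proof.
move=> hn; rewrite (@sum_pick2 K n 0 1 (fun x => if (x <= 1)%N then G x else 0)) //; try lia.
by move=> x hx h0 h1; case: ifP => // h; exfalso; lia.
Qed.

Lemma sum_le0 (G : nat -> K) : (0 < n)%N ->
  \sum_(x < n) (if (x <= 0)%N then G x else 0) = G 0%N.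
Proof.
move=> hn; rewrite (@sum_pick1 K n 0 (fun x => if (x <= 0)%N then G x else 0)) //.
by move=> x hx h0; case: ifP => // h; exfalso; lia.
Qed.

End Pick.

Section Main.
Variables (K : fieldType) (n : nat) (hn : (1 < n)%N) (P D : nat -> nat -> nat -> K).
Hypotheses (HP : coalg_morph n P) (HD : coalg_morph n D).
Hypotheses (hPa : forall j, (j < n)%N -> P 0%N j 1%N = 0)
           (hDa : forall j, (j < n)%N -> D 0%N j 1%N = 0).
Hypothesis c1ax : forall (a b c : vec K n) (k : 'I_n),
     sw b (fun b1 b2 => bil P (bil P a b1) (bil D c b2) k) =
     sw c (fun c1 c2 => bil P (bil P a c2) (bil P b c1) k).
Hypothesis c2ax : forall (a b c : vec K n) (k : 'I_n),
     sw b (fun b1 b2 => bil D (bil P a b1) (bil P c b2) k) =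
     sw c (fun c1 c2 => bil P (bil D a c2) (bil D b c1) k).

Let k1 : 'I_n := Ordinal hn.
Let hk1 : nat_of_ord k1 = 1%N. Proof. by []. Qed.

Lemma E1 j l : (j < n)%N -> (l < n)%N ->
  \sum_(j1 < n) (if (j1 <= j)%N then P 1%N j1 1%N * \sum_(v < n) D l (j - j1)%N v * P 1%N v 1%N else 0)
  = \sum_(c1 < n) (if (c1 <= l)%N then P 1%N (l - c1)%N 1%N * \sum_(v < n) P j c1 v * P 1%N v 1%N else 0).
Proof.
move=> hj hl.
have := c1ax (bas K 1) (bas K j) (bas K l) k1.
rewrite sw2E // sw2E' // hk1 => E.
transitivity (\sum_(j1 < n) (if (j1 <= j)%N then
     \sum_(u < n) \sum_(v < n) P 1%N j1 u * D l (j - j1)%N v * P u v 1%N else 0)).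
  apply: eq_bigr => j1 _; case: ifP => // _.
  rewrite pickU //; move=> u hu hu1; exact: (V1u hn HP hPa (ltn_ord j1) hu hu1).
rewrite E; apply: eq_bigr => c1 _; case: ifP => // _.
rewrite pickU //; move=> u hu hu1; apply: (V1u hn HP hPa) => //; lia.
Qed.

Lemma E2 j l : (j < n)%N -> (l < n)%N ->
  \sum_(j1 < n) (if (j1 <= j)%N then P 1%N j1 1%N * \sum_(v < n) P l (j - j1)%N v * D 1%N v 1%N else 0)
  = \sum_(c1 < n) (if (c1 <= l)%N then D 1%N (l - c1)%N 1%N * \sum_(v < n) D j c1 v * P 1%N v 1%N else 0).
Proof.
move=> hj hl.
have := c2ax (bas K 1) (bas K j) (bas K l) k1.
rewrite sw2E // sw2E' // hk1 => E.
transitivity (\sum_(j1 < n) (if (j1 <= j)%N then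
     \sum_(u < n) \sum_(v < n) P 1%N j1 u * P l (j - j1)%N v * D u v 1%N else 0)).
  apply: eq_bigr => j1 _; case: ifP => // _.
  rewrite pickU //; move=> u hu hu1; exact: (V1u hn HP hPa (ltn_ord j1) hu hu1).
rewrite E; apply: eq_bigr => c1 _; case: ifP => // _.
rewrite pickU //; move=> u hu hu1; apply: (V1u hn HD hDa) => //; lia.
Qed.

Hypothesis hc : P 1%N 1%N 1%N != 0.
Hypothesis hP10 : P 1%N 0%N 1%N != 0.

Lemma P10one : P 1%N 0%N 1%N = 1.
Proof.
have := E1 hn (ltnW hn).
rewrite (@sum_le1 K n (fun j1 => P 1%N j1 1%N * \sum_(v < n) D 0%N (1 - j1)%N v * P 1%N v 1%N)) //.
rewrite (@sum_le0 K n (fun c1 => P 1%N (0 - c1)%N 1%N * \sum_(v < n) P 1%N c1 v * P 1%N v 1%N)); last lia.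
rewrite !subnn !subn0 (S01 hn HD hDa (fun v => P 1%N v 1%N)) (S00 hn HD hDa (fun v => P 1%N v 1%N)).
rewrite (S1j hn HP hPa (fun v => P 1%N v 1%N)); last lia.
rewrite mulr0 add0r => E.
have H0 : P 1%N 1%N 1%N * P 1%N 0%N 1%N * (P 1%N 0%N 1%N - 1) =
   P 1%N 0%N 1%N * (P 1%N 0%N 1%N * P 1%N 1%N 1%N) - P 1%N 1%N 1%N * P 1%N 0%N 1%N by ring.
rewrite -E subrr in H0.
move/eqP: H0; rewrite !mulf_eq0 (negPf hc) (negPf hP10) /= subr_eq0 => /eqP //.
Qed.

Lemma D10one : D 1%N 0%N 1%N = 1.
Proof.
have := E1 (ltnW hn) hn.
rewrite (@sum_le0 K n (fun j1 => P 1%N j1 1%N * \sum_(v < n) D 1%N (0 - j1)%N v * P 1%N v 1%N)); last lia.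
rewrite (@sum_le1 K n (fun c1 => P 1%N (1 - c1)%N 1%N * \sum_(v < n) P 0%N c1 v * P 1%N v 1%N)) //.
rewrite !subnn !subn0 (S01 hn HP hPa (fun v => P 1%N v 1%N)) (S00 hn HP hPa (fun v => P 1%N v 1%N)).
rewrite (S1j hn HD hDa (fun v => P 1%N v 1%N)); last lia.
rewrite P10one mulr0 addr0 !mul1r mulr1 => E.
have H0 : (D 1%N 0%N 1%N - 1) * P 1%N 1%N 1%N = D 1%N 0%N 1%N * P 1%N 1%N 1%N - P 1%N 1%N 1%N by ring.
rewrite E subrr in H0.
move/eqP: H0; rewrite !mulf_eq0 (negPf hc) orbF subr_eq0 => /eqP //.
Qed.

Hypothesis hchar : forall N, (0 < N)%N -> N%:R != 0 :> K.

Lemma step m : (m < n)%N -> (forall j, (j < m)%N -> D 1%N j 1%N = P 1%N j 1%N) ->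
  D 1%N m 1%N = P 1%N m 1%N.
Proof.
move=> hm IH.
have [->|m0] := eqVneq m 0%N; first by rewrite D10one P10one.
have HPn : forall j, (j < n)%N -> P 0%N j 1%N = 0 := hPa.
have e1 := E1 hm hn.
rewrite (@sum_le1 K n (fun c1 => P 1%N (1 - c1)%N 1%N * \sum_(v < n) P m c1 v * P 1%N v 1%N)) // in e1.
rewrite subn0 subnn P10one mul1r in e1.
have e2 := E2 hn hm.
rewrite (@sum_le1 K n (fun j1 => P 1%N j1 1%N * \sum_(v < n) P m (1 - j1)%N v * D 1%N v 1%N)) // in e2.
rewrite subn0 subnn P10one mul1r in e2.
have hR : \sum_(c1 < n) (if (c1 <= m)%N then D 1%N (m - c1)%N 1%N * \sum_(v < n) D 1%N c1 v * P 1%N v 1%N else 0)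
  - \sum_(j1 < n) (if (j1 <= m)%N then P 1%N j1 1%N * \sum_(v < n) D 1%N (m - j1)%N v * P 1%N v 1%N else 0)
  = P 1%N 1%N 1%N * (D 1%N m 1%N - P 1%N m 1%N).
  rewrite -sumrB.
  rewrite (@sum_pick1 K n m (fun x => (if (x <= m)%N then D 1%N (m - x)%N 1%N * \sum_(v < n) D 1%N x v * P 1%N v 1%N else 0)
     - (if (x <= m)%N then P 1%N x 1%N * \sum_(v < n) D 1%N (m - x)%N v * P 1%N v 1%N else 0))) //.
    rewrite leqnn subnn (S1j (j:=m) hn HD hDa (fun v => P 1%N v 1%N)) //.
    rewrite (S1j (j:=0%N) hn HD hDa (fun v => P 1%N v 1%N)) ?D10one; last lia.
    ring.
  move=> x hx hxm; case: ifP => h; last by rewrite subrr.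
  rewrite (S1j (j:=x) hn HD hDa (fun v => P 1%N v 1%N)) //.
  rewrite (S1j (j:=(m - x)%N) hn HD hDa (fun v => P 1%N v 1%N)); last lia.
  rewrite (IH x); last lia.
  ring.
have hT0 : \sum_(v < n) P m 0%N v * D 1%N v 1%N - \sum_(v < n) P m 0%N v * P 1%N v 1%N
   = D 1%N m 1%N - P 1%N m 1%N.
  rewrite -sumrB.
  rewrite (@sum_pick1 K n m (fun v => P m 0%N v * D 1%N v 1%N - P m 0%N v * P 1%N v 1%N)) //.
    by rewrite (W2 hn HP hm) P10one expr1n !mul1r.
  move=> x hx hxm; case: (ltnP x m) => h; first by rewrite IH // subrr.
  by rewrite (Xv hn HP hPa (k:=x)) // ?mul0r ?subrr //; lia.
have hT1 : \sum_(v < n) P m 1%N v * D 1%N v 1%N - \sum_(v < n) P m 1%N v * P 1%N v 1%N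
   = m%:R * P 1%N 1%N 1%N * (D 1%N m 1%N - P 1%N m 1%N).
  rewrite -sumrB.
  rewrite (@sum_pick1 K n m (fun v => P m 1%N v * D 1%N v 1%N - P m 1%N v * P 1%N v 1%N)) //.
    by rewrite (W4 hn HP hPa P10one hm); ring.
  move=> x hx hxm; case: (ltnP x m) => h; first by rewrite IH // subrr.
  by rewrite (Xv hn HP hPa (k:=x)) // ?mul0r ?subrr //; lia.
have H0 : m%:R * P 1%N 1%N 1%N * (D 1%N m 1%N - P 1%N m 1%N) = 0.
  rewrite -hT1.
  set A0 := \sum_(v < n) P m 0%N v * D 1%N v 1%N.
  set B0 := \sum_(v < n) P m 0%N v * P 1%N v 1%N.
  set A1 := \sum_(v < n) P m 1%N v * D 1%N v 1%N.
  set B1 := \sum_(v < n) P m 1%N v * P 1%N v 1%N.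
  have -> : A1 - B1 = (A1 + P 1%N 1%N 1%N * A0) - (P 1%N 1%N 1%N * B0 + B1)
     - P 1%N 1%N 1%N * (A0 - B0) by ring.
  by rewrite e2 -e1 hR hT0 subrr.
move/eqP: H0; rewrite !mulf_eq0 (negPf (hchar _)) ?(negPf hc) /= ?subr_eq0; last lia.
by move/eqP.
Qed.

End Main.


Section Reg.
Variables (K : fieldType) (n : nat) (hn : (1 < n)%N) (P U : nat -> nat -> nat -> K).
Hypothesis HU : coalg_morph n U.

Lemma reg_core : bil P (bil U (bas K 1) (bas K 0)) (bas K 0) (Ordinal hn) = U 1%N 0%N 1%N * P 1%N 0%N 1%N.
Proof.
rewrite bilEr; last lia.
transitivity (\sum_(u < n) U 1%N 0%N u * P u 0%N 1%N).
  by apply: eq_bigr => u _; rewrite bilE //; lia.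
rewrite (@sum_pick1 K n 1 (fun u => U 1%N 0%N u * P u 0%N 1%N)) //.
move=> x hx hx1; case: x hx hx1 => [|[|x]] hx hx1 //.
  by rewrite (f0 HU) //= mulr0n mul0r.
by rewrite (Vsum hn HU) ?mul0r //; lia.
Qed.

Lemma eps0 : eps (bas K (n:=n) 0) = 1.
Proof.
rewrite /eps /bas (@sum_pick1 K n 0 (fun j => (j == 0%N)%:R * (j == 0%N)%:R)); last 2 first.
- lia.
- by move=> x _ /negPf ->; rewrite mul0r.
by rewrite eqxx mul1r.
Qed.

Lemma regP : (forall (a b : vec K n) (k : 'I_n),
       sw b (fun b1 b2 => bil P (bil U a b1) b2 k) = eps b * a k) -> P 1%N 0%N 1%N != 0.
Proof.
move=> r1; have := r1 (bas K 1) (bas K 0) (Ordinal hn).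
rewrite swE; last lia.
rewrite (@sum_le0 K n (fun j1 => bil P (bil U (bas K 1) (bas K j1)) (bas K (0 - j1)%N) (Ordinal hn))); last lia.
rewrite subnn reg_core eps0 mul1r /bas /= => E.
apply/eqP => h; move: E; rewrite h mulr0 => /eqP; by rewrite eq_sym oner_eq0.
Qed.

Lemma regD : (forall (a b : vec K n) (k : 'I_n),
       sw b (fun b1 b2 => bil P (bil U a b2) b1 k) = eps b * a k) -> P 1%N 0%N 1%N != 0.
Proof.
move=> r1; have := r1 (bas K 1) (bas K 0) (Ordinal hn).
rewrite swE; last lia.
rewrite (@sum_le0 K n (fun j1 => bil P (bil U (bas K 1) (bas K (0 - j1)%N)) (bas K j1) (Ordinal hn))); last lia.
rewrite subnn reg_core eps0 mul1r /bas /= => E.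
apply/eqP => h; move: E; rewrite h mulr0 => /eqP; by rewrite eq_sym oner_eq0.
Qed.

End Reg.

Theorem proposition4p3 (K : closedFieldType) (hK : [pchar K] =i pred0)
  (n : nat) (hn : (2 <= n)%N) (P D : nat -> nat -> nat -> K) :
  regular_qcycle n P D -> P 1%N 1%N 1%N != 0 ->
  forall r : 'I_n, D 1%N r 1%N = P 1%N r 1%N.
Proof.
move=> [[HP [HD [U [V [HU [HV [r1 [r2 [r3 r4]]]]]]]]] [c1 [c2 c3]]] hc.
have hchar : forall N, (0 < N)%N -> N%:R != 0 :> K.
  by move=> N hN; rewrite (pcharf0P _).1 //; lia.
have hP10 : P 1%N 0%N 1%N != 0 := regP hn HU r1.
have hD10 : D 1%N 0%N 1%N != 0 := regD hn HV r4.
have hPa := Amain hn HP hchar hP10.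
have hDa := Amain hn HD hchar hD10.
suff H : forall m, (m < n)%N -> D 1%N m 1%N = P 1%N m 1%N by move=> r; apply: H.
elim/ltn_ind => m IH hm.
apply: (step hn HP HD hPa hDa c1 c2 hc hP10 hchar hm) => j hj.
apply: IH => //; lia.
Qed.
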